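(* The map $\mathrm{mult}:\mathcal{F}_1\to\mathcal{F}_0$, $x\otimes y\mapsto xy$, is bounded and satisfies $\mathrm{mult}\,\mathrm{mult}^*=1$; hence it extends to a bounded linear map $L^2(M^2)\to L^2(M)$.
   Context: $M=\ell^\infty\text{-}\bigoplus_{i\in I}M_i$ with $M_i=\mathbb{C}^{d_i\times d_i}$, $M_0$ the finitely supported part, $E^i_{k,l}$ matrix units. $\omega$ is a delta-form: $\omega(x)=\mathrm{tr}_M(x\sigma)$ where $\mathrm{tr}_M(E^i_{k,l})=\delta_{k,l}d_i$ and $\sigma=\sum_i\sigma_i$ ($\sigma_i\in M_i$) is positive invertible with $\mathrm{Tr}(\sigma_i^{-1})=d_i$. $\mathcal{F}_n=M_0^{\otimes(n+1)}$ with inner product $\langle x_0\otimes\cdots\otimes x_n,y_0\otimes\cdots\otimes y_n\rangle=\prod_j\omega(y_j^*x_j)$; $L^2(M^{n+1})$ is its completion. *)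

(* Defs.v *)
From HB Require Import structures.
From mathcomp Require Import all_boot all_order all_algebra.
From mathcomp Require Import complex.
From mathcomp Require Import boolp classical_sets cardinality fsbigop reals.
From mathcomp Require Export spectral.

Set Implicit Arguments.
Unset Strict Implicit.
Unset Printing Implicit Defensive.

Import Order.TTheory GRing.Theory Num.Theory.
Local Open Scope ring_scope.
Local Open Scope complex_scope.
Local Open Scope sesquilinear_scope.
Local Open Scope classical_set_scope.

(* Elements of M = l^oo-(+)_i M_i, M_i = C^{d_i x d_i}, are families          *)
(* x : forall i, 'M_(d i).  M_0 = the finitely supported ones.               *)
Definition Mfam (I : Type) (R : realType) (d : I -> nat) :=
  forall i : I, 'M[R[i]]_(d i).

Definition fin_supp (I : Type) (R : realType) (d : I -> nat) (x : Mfam R d) : Prop :=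
  finite_set [set i | x i != 0].

Definition mulM (I : Type) (R : realType) (d : I -> nat) (x y : Mfam R d) : Mfam R d :=
  fun i => x i *m y i.
Definition adjM (I : Type) (R : realType) (d : I -> nat) (x : Mfam R d) : Mfam R d :=
  fun i => (x i) ^t*.

(* tr_M(x) = sum_i d_i Tr(x_i), so that tr_M(E^i_{k,l}) = delta_{k,l} d_i    *)
(* (finitely supported sum; meaningful on M_0).                              *)
Definition trM (I : choiceType) (R : realType) (d : I -> nat) (x : Mfam R d) : R[i] :=
  \sum_(i \in [set: I]) ((d i)%:R * \tr (x i)).

Definition omega (I : choiceType) (R : realType) (d : I -> nat) (sigma : Mfam R d)
  (x : Mfam R d) : R[i] := trM (mulM x sigma).

Definition posmx (R : realType) (n : nat) (A : 'M[R[i]]_n) : Prop :=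
  A ^t* = A /\ forall v : 'cV[R[i]]_n, 0 <= (v ^t* *m A *m v) 0 0.

Definition delta_form (I : Type) (R : realType) (d : I -> nat) (sigma : Mfam R d) : Prop :=
  forall i, [/\ posmx (sigma i), sigma i \in unitmx & \tr (invmx (sigma i)) = (d i)%:R].

Definition ip0 (I : choiceType) (R : realType) (d : I -> nat) (sigma : Mfam R d)
  (x y : Mfam R d) : R[i] := omega sigma (mulM (adjM y) x).

(* Elements of F_1 = M_0 (x) M_0 (algebraic tensor product) are represented *)
(* as finite sums  sum_a x_a (x) y_a, i.e. lists of pairs (x_a, y_a) with    *)
(* x_a, y_a in M_0.                                                          *)
Definition F1_valid (I : Type) (R : realType) (d : I -> nat)
  (s : seq (Mfam R d * Mfam R d)) : Prop :=
  foldr (fun a P => (fin_supp a.1 /\ fin_supp a.2) /\ P) True s.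

Definition ip1 (I : choiceType) (R : realType) (d : I -> nat) (sigma : Mfam R d)
  (s t : seq (Mfam R d * Mfam R d)) : R[i] :=
  \sum_(a <- s) \sum_(b <- t) (ip0 sigma a.1 b.1 * ip0 sigma a.2 b.2).

Definition multM (I : Type) (R : realType) (d : I -> nat)
  (s : seq (Mfam R d * Mfam R d)) : Mfam R d :=
  fun i => \sum_(a <- s) (a.1 i *m a.2 i).

(* Main.v *)
Require Import Defs.
From HB Require Import structures.
From mathcomp Require Import all_boot all_order all_algebra.
From mathcomp Require Import finmap.
From mathcomp Require Import complex.
From mathcomp Require Import boolp classical_sets cardinality fsbigop reals.
From mathcomp Require Import spectral sesquilinear.
From mathcomp Require Import ring.
From Stdlib Require List.
Import Order.TTheory GRing.Theory Num.Theory.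
Local Open Scope ring_scope.

Lemma big_In (V : nmodType) (K : Type) (s : seq K) (F G : K -> V) :
  (forall a, List.In a s -> F a = G a) -> \sum_(a <- s) F a = \sum_(a <- s) G a.
Proof.
elim: s => [|a s IH] H; first by rewrite !big_nil.
rewrite !big_cons H /=; last by left.
by rewrite IH // => b Hb; apply: H; right.
Qed.
Arguments big_In {V K s F G}.

Section Generic.
Context {C : numClosedFieldType}.
Context {T : Type}.



Lemma big_all_eq (K : Type) (s : seq K) (p : pred K) (F G : K -> C) :
  all p s -> (forall a, p a -> F a = G a) -> \sum_(a <- s) F a = \sum_(a <- s) G a.
Proof.
elim: s => [|a s IH] /=; first by rewrite !big_nil.
by move=> /andP[pa ps] H; rewrite !big_cons H // IH.
Qed.

Lemma big_all_ge0 (K : Type) (s : seq K) (p : pred K) (F : K -> C) :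
  all p s -> (forall a, p a -> 0 <= F a) -> 0 <= \sum_(a <- s) F a.
Proof.
elim: s => [|a s IH] /=; first by rewrite !big_nil.
by move=> /andP[pa ps] H; rewrite !big_cons addr_ge0 // ?H // IH.
Qed.

Arguments big_all_eq {K s p F G}.
Arguments big_all_ge0 {K s p F}.

Definition SOS (P : T -> Prop) (f : T -> T -> C) :=
  exists X : seq (C * (T -> C)), all (fun x => 0 <= x.1) X /\
    forall u v, P u -> P v -> f u v = \sum_(x <- X) x.1 * ((x.2 v)^* * x.2 u).

Lemma SOS_ext P f g : (forall u v, P u -> P v -> f u v = g u v) -> SOS P g -> SOS P f.
Proof.
move=> fg [X [HX HXg]]; exists X; split=> // u v Pu Pv.
by rewrite fg // HXg.
Qed.

Lemma SOS_1 P (w : C) (phi : T -> C) : 0 <= w ->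
  SOS P (fun u v => w * ((phi v)^* * phi u)).
Proof.
move=> w0; exists [:: (w, phi)]; split; first by rewrite /= w0.
by move=> u v _ _; rewrite big_seq1.
Qed.

Lemma SOS_sum P (K : Type) (J : seq K) (F : K -> T -> T -> C) :
  (forall k, SOS P (F k)) -> SOS P (fun u v => \sum_(k <- J) F k u v).
Proof.
move=> HF; elim: J => [|k J [X [HX HXe]]].
  by exists [::]; split => // u v _ _; rewrite !big_nil.
have [Y [HY HYe]] := HF k.
exists (Y ++ X); split; first by rewrite all_cat HY HX.
by move=> u v Pu Pv; rewrite big_cons big_cat /= HYe // HXe.
Qed.

Definition Zs (phi psi : T -> C) (s : seq (T * T)) :=
  \sum_(a <- s) phi a.1 * psi a.2.


Lemma swap4 (A B X Y : Type) (sa : seq A) (sb : seq B) (sx : seq X) (sy : seq Y)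
  (F : A -> B -> X -> Y -> C) :
  \sum_(a <- sa) \sum_(b <- sb) \sum_(x <- sx) \sum_(y <- sy) F a b x y =
  \sum_(x <- sx) \sum_(y <- sy) \sum_(a <- sa) \sum_(b <- sb) F a b x y.
Proof.
under eq_bigr => a _ do rewrite exchange_big.
rewrite exchange_big; apply: eq_bigr => x _.
under eq_bigr => a _ do rewrite exchange_big.
by rewrite exchange_big.
Qed.

Lemma SOS_prod P f g X Y (s u : seq (T * T)) :
  (forall u v, P u -> P v -> f u v = \sum_(x <- X) x.1 * ((x.2 v)^* * x.2 u)) ->
  (forall u v, P u -> P v -> g u v = \sum_(x <- Y) x.1 * ((x.2 v)^* * x.2 u)) ->
  (forall a, List.In a s -> P a.1 /\ P a.2) ->
  (forall a, List.In a u -> P a.1 /\ P a.2) ->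
  \sum_(a <- s) \sum_(b <- u) f a.1 b.1 * g a.2 b.2 =
  \sum_(x <- X) \sum_(y <- Y) x.1 * y.1 * (Zs x.2 y.2 s * (Zs x.2 y.2 u)^*).
Proof.
move=> Hf Hg Hs Hu.
rewrite (@big_In _ _ s (fun a => _) (fun a => \sum_(b <- u) \sum_(x <- X) \sum_(y <- Y)
   x.1 * y.1 * ((x.2 a.1 * y.2 a.2) * (x.2 b.1 * y.2 b.2)^*))); last first.
  move=> a Ha; apply: big_In => b Hb.
  have [Pa1 Pa2] := Hs a Ha; have [Pb1 Pb2] := Hu b Hb.
  rewrite Hf // Hg // big_distrl /=; apply: eq_bigr => x _.
  rewrite big_distrr /=; apply: eq_bigr => y _.
  rewrite rmorphM /=; ring.
rewrite swap4; apply: eq_bigr => x _; apply: eq_bigr => y _.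
rewrite /Zs rmorph_sum /= big_distrl /= big_distrr /=; apply: eq_bigr => a _.
rewrite big_distrr /= big_distrr /=; apply: eq_bigr => b _.
ring.
Qed.


Definition Bf (X Y : seq (C * (T -> C))) (s u : seq (T * T)) :=
  \sum_(x <- X) \sum_(y <- Y) x.1 * y.1 * (Zs x.2 y.2 s * (Zs x.2 y.2 u)^*).

Lemma Bf_comb X Y s u :
  all (fun x => 0 <= x.1) X -> all (fun x => 0 <= x.1) Y ->
  0 <= Bf X Y s s - Bf X Y s u - Bf X Y u s + Bf X Y u u.
Proof.
move=> HX HY.
have -> : Bf X Y s s - Bf X Y s u - Bf X Y u s + Bf X Y u u =
  \sum_(x <- X) \sum_(y <- Y) x.1 * y.1 *
     ((Zs x.2 y.2 s - Zs x.2 y.2 u) * (Zs x.2 y.2 s - Zs x.2 y.2 u)^*).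
  rewrite /Bf -!sumrB -big_split /=; apply: eq_bigr => x _.
  rewrite -!sumrB -big_split /=; apply: eq_bigr => y _.
  rewrite rmorphB /=; ring.
apply: (big_all_ge0 HX) => x x0; apply: (big_all_ge0 HY) => y y0.
by apply: mulr_ge0; [exact: mulr_ge0 | exact: mul_conjC_ge0].
Qed.

Lemma Bf_ge0 X Y u :
  all (fun x => 0 <= x.1) X -> all (fun x => 0 <= x.1) Y -> 0 <= Bf X Y u u.
Proof.
move=> HX HY; apply: (big_all_ge0 HX) => x x0; apply: (big_all_ge0 HY) => y y0.
by apply: mulr_ge0; [exact: mulr_ge0 | exact: mul_conjC_ge0].
Qed.

Lemma Bf_conj X Y s u :
  all (fun x => 0 <= x.1) X -> all (fun x => 0 <= x.1) Y ->
  Bf X Y u s = (Bf X Y s u)^*.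
Proof.
move=> HX HY; rewrite /Bf rmorph_sum /=.
apply: (big_all_eq HX) => x x0; rewrite rmorph_sum /=.
apply: (big_all_eq HY) => y y0.
rewrite !rmorphM /= conjCK (conj_Creal (ger0_real x0)) (conj_Creal (ger0_real y0)); ring.
Qed.

End Generic.

Local Open Scope sesquilinear_scope.

Section Block.
Context {C : numClosedFieldType}.

Lemma delta_mulE n (k l p q : 'I_n) (X : 'M[C]_n) :
  (delta_mx k l *m X) p q = (p == k)%:R * X l q.
Proof.
rewrite mxE (bigD1 l) //= big1 => [|j jl]; rewrite !mxE.
  by rewrite eqxx andbT addr0.
by rewrite (negbTE jl) andbF mul0r.
Qed.

Lemma mul_deltaE n (k l p q : 'I_n) (X : 'M[C]_n) :
  (X *m delta_mx k l) p q = X p k * (q == l)%:R.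
Proof.
rewrite mxE (bigD1 k) //= big1 => [|j jk]; rewrite !mxE.
  by rewrite eqxx /= addr0.
by rewrite (negbTE jk) /= mulr0.
Qed.

Lemma sum_nat_pred1 n (k : 'I_n) (F : 'I_n -> C) :
  \sum_(i < n) (i == k)%:R * F i = F k.
Proof.
rewrite (bigD1 k) //= big1 => [|i ik]; first by rewrite eqxx mul1r addr0.
by rewrite (negbTE ik) mul0r.
Qed.

Lemma tr_delta_mul n (k l : 'I_n) (X : 'M[C]_n) : \tr (delta_mx k l *m X) = X l k.
Proof.
rewrite /mxtrace; under eq_bigr do rewrite delta_mulE.
by rewrite sum_nat_pred1.
Qed.

Lemma trace_delta2 n (X Y : 'M[C]_n) :
  \sum_(k < n) \sum_(l < n) \tr (delta_mx k l *m X) * \tr (delta_mx l k *m Y) =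
  \tr (X *m Y).
Proof.
under eq_bigr do under eq_bigr do rewrite !tr_delta_mul.
rewrite exchange_big /mxtrace; apply: eq_bigr => i _.
by rewrite mxE.
Qed.

Lemma sum_delta_conj n (A : 'M[C]_n) :
  \sum_(k < n) \sum_(l < n) delta_mx l k *m A *m delta_mx k l = \tr A *: 1%:M.
Proof.
apply/matrixP => p q; rewrite !mxE summxE.
under eq_bigr do rewrite summxE.
under eq_bigr do under eq_bigr do rewrite mul_deltaE delta_mulE.
rewrite exchange_big /=.
under eq_bigr => l _ do rewrite -big_distrl /= -big_distrr /=.
have -> : \sum_(l < n) (p == l)%:R * (\sum_(k < n) A k k) * (q == l)%:R =
   \sum_(l < n) (l == p)%:R * ((\sum_(k < n) A k k) * (q == l)%:R).
  by apply: eq_bigr => l _; rewrite eq_sym mulrA.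
rewrite sum_nat_pred1 /mxtrace eq_sym.
by case: (p == q); rewrite ?mulr1 ?mulr0.
Qed.

Lemma block_mult n (sig eta : 'M[C]_n) :
  sig \in unitmx -> \tr (invmx sig) = n%:R ->
  \sum_(k < n) \sum_(l < n)
    ((n%:R^-1 *: (eta *m sig *m delta_mx l k *m invmx sig)) *m
     (delta_mx k l *m invmx sig)) = eta.
Proof.
move=> su str.
case: n sig eta su str => [|n] sig eta su str.
  by apply/matrixP => -[i Hi]; exfalso; rewrite ltn0 in Hi.
have -> : \sum_(k < n.+1) \sum_(l < n.+1)
    ((n.+1%:R^-1 *: (eta *m sig *m delta_mx l k *m invmx sig)) *m
     (delta_mx k l *m invmx sig)) =
  n.+1%:R^-1 *: (eta *m sig *m
    (\sum_(k < n.+1) \sum_(l < n.+1) delta_mx l k *m invmx sig *m delta_mx k l)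
    *m invmx sig).
  symmetry; rewrite mulmx_sumr mulmx_suml scaler_sumr; apply: eq_bigr => k _.
  rewrite mulmx_sumr mulmx_suml scaler_sumr; apply: eq_bigr => l _.
  by rewrite -scalemxAl !mulmxA.
rewrite sum_delta_conj str scalemx1 mul_mx_scalar.
rewrite -scalemxAl mulmxK // scalerA mulVf ?scale1r //.
by rewrite pnatr_eq0.
Qed.

Lemma invmx_tC n (sig : 'M[C]_n) : sig^t* = sig -> (invmx sig)^t* = invmx sig.
Proof. by move=> h; rewrite trmx_inv map_invmx h. Qed.

Lemma delta_tC n (k l : 'I_n) : (delta_mx k l : 'M[C]_n)^t* = delta_mx l k.
Proof. by rewrite trmx_delta map_delta_mx. Qed.

Lemma tr_H1 n (sig y : 'M[C]_n) (k l : 'I_n) : sig^t* = sig -> sig \in unitmx ->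
  \tr ((delta_mx k l *m invmx sig)^t* *m y *m sig) = \tr (delta_mx l k *m y).
Proof.
move=> sh su; rewrite trmx_mul map_mxM invmx_tC // delta_tC.
by rewrite mxtrace_mulC !mulmxA mulmxV // mul1mx.
Qed.

Lemma tr_H2 n (sig eta x : 'M[C]_n) (k l : 'I_n) (c : C) :
  sig^t* = sig -> sig \in unitmx -> c^* = c ->
  \tr ((c *: (eta *m sig *m delta_mx l k *m invmx sig))^t* *m x *m sig) =
  c * \tr (delta_mx k l *m (sig *m eta^t* *m x)).
Proof.
move=> sh su cc; rewrite linearZ /= map_mxZ /= cc -!scalemxAl mxtraceZ; congr (_ * _).
rewrite !trmx_mul !map_mxM invmx_tC // delta_tC sh.
by rewrite mxtrace_mulC !mulmxA mulmxV // mul1mx.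
Qed.

Lemma block_adj n (sig eta x y : 'M[C]_n) : sig^t* = sig -> sig \in unitmx ->
  \sum_(k < n) \sum_(l < n)
    ((n%:R * \tr ((n%:R^-1 *: (eta *m sig *m delta_mx l k *m invmx sig))^t* *m x *m sig)) *
     (n%:R * \tr ((delta_mx k l *m invmx sig)^t* *m y *m sig))) =
  n%:R * \tr (eta^t* *m (x *m y) *m sig).
Proof.
move=> sh su.
have cc : (n%:R^-1 : C)^* = n%:R^-1.
  by apply: conj_Creal; apply: ger0_real; rewrite invr_ge0 ler0n.
under eq_bigr do under eq_bigr do rewrite tr_H1 // tr_H2 //.
case: n sig eta x y sh su cc => [|n] sig eta x y sh su cc.
  by rewrite big_ord0 mul0r.
have -> : \sum_(k < n.+1) \sum_(l < n.+1)
    (n.+1%:R * (n.+1%:R^-1 * \tr (delta_mx k l *m (sig *m eta^t* *m x))) *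
     (n.+1%:R * \tr (delta_mx l k *m y))) =
  n.+1%:R * \sum_(k < n.+1) \sum_(l < n.+1)
    (\tr (delta_mx k l *m (sig *m eta^t* *m x)) * \tr (delta_mx l k *m y)).
  rewrite big_distrr /=; apply: eq_bigr => k _.
  rewrite big_distrr /=; apply: eq_bigr => l _.
  have nz : (n.+1%:R : C) != 0 by rewrite pnatr_eq0.
  by rewrite mulrA mulrA mulfV // mul1r mulrCA mulrA.
rewrite trace_delta2; congr (_ * _).
by rewrite [RHS]mxtrace_mulC !mulmxA.
Qed.

End Block.

Section Spec.
Context {R : realType}.
Local Notation C := (R[i]).

Lemma delta_sandwich n (M : 'M[C]_n) (r : 'I_n) :
  (delta_mx 0 r *m M *m delta_mx r 0 : 'M[C]_1) 0 0 = M r r.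
Proof.
rewrite mxE (bigD1 r) //= big1 => [|j jr]; last by rewrite !mxE (negbTE jr) /= mulr0.
rewrite !mxE eqxx /= mulr1 addr0 (bigD1 r) //= big1 => [|j jr]; last first.
  by rewrite !mxE (negbTE jr) andbF mul0r.
by rewrite !mxE !eqxx /= mul1r addr0.
Qed.

Lemma psd_decomp n (S : 'M[C]_n) : posmx S ->
  (forall r, 0 <= spectral_diag S 0 r) /\
  forall x y : 'M[C]_n, \tr (y^t* *m x *m S) =
    \sum_(p < n) \sum_(r < n) spectral_diag S 0 r *
      (((y *m (spectralmx S)^t*) p r)^* * (x *m (spectralmx S)^t*) p r).
Proof.
move=> [hS hpos].
have nS : S \is normalmx by apply/normalmxP; rewrite hS.
have E := orthomx_spectralP nS.
have U := spectral_unitarymx S.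
rewrite invmx_unitary // in E.
set P := spectralmx S in E U *; set D := spectral_diag S in E *.
split.
  move=> r.
  have PSP : P *m S *m P^t* = diag_mx D.
    rewrite E !mulmxA.
    have /unitarymxP PP := U.
    by rewrite PP mul1mx -mulmxA PP mulmx1.
  have := hpos (P^t* *m delta_mx r 0).
  rewrite trmx_mul map_mxM trmxCK trmx_delta map_delta_mx.
  have -> : ('e_r : 'rV[C]_n) *m P *m S *m (P^t* *m (delta_mx r 0 : 'cV[C]_n)) =
     ('e_r : 'rV[C]_n) *m (P *m S *m P^t*) *m (delta_mx r 0 : 'cV[C]_n) by rewrite !mulmxA.
  by rewrite PSP delta_sandwich mxE eqxx mulr1n.
move=> x y.
rewrite {1}E !mulmxA mxtrace_mulC !mulmxA.
have -> : P *m y^t* = (y *m P^t*)^t* by rewrite trmx_mul map_mxM trmxCK.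
rewrite -(mulmxA _ x).
set Z := y *m P^t*; set W := x *m P^t*.
rewrite /mxtrace.
under eq_bigr do rewrite mul_mx_diag mxE mxE big_distrl /=.
rewrite exchange_big /=; apply: eq_bigr => p _; apply: eq_bigr => r _.
by rewrite !mxE mulrC.
Qed.
End Spec.

Section Main.
Context {I : choiceType} {R : realType} {d : I -> nat} (sigma : Mfam R d).
Local Notation C := (R[i]).
Local Notation T := (Mfam R d).

Definition suppf (x : T) : {fset I} := fset_set [set i | x i != 0].

Lemma suppfP x i : fin_supp x -> i \notin suppf x -> x i = 0.
Proof.
move=> fx; rewrite /suppf in_fset_set // => /negP Hi.
by apply/eqP/negP => Hx; apply: Hi; rewrite inE /=; apply/negP.
Qed.

Definition suppL (s : seq (T * T)) : {fset I} :=
  foldr (fun a A => suppf a.1 `|` suppf a.2 `|` A)%fset fset0 s.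

Lemma suppLP (s : seq (T * T)) a i : F1_valid s -> List.In a s -> i \notin suppL s ->
  a.1 i = 0 /\ a.2 i = 0.
Proof.
elim: s => [|b s IH] //= [[f1 f2] Vs] [<-|Ha]; rewrite !inE !negb_or => /andP[/andP[h1 h2] h3].
  by split; apply: suppfP.
exact: IH.
Qed.

Lemma valid_cat (s u : seq (T * T)) : F1_valid s -> F1_valid u -> F1_valid (s ++ u).
Proof. by elim: s => [|b s IH] //= [Hb Hs] Hu; split => //; apply: IH. Qed.

Lemma valid_map (X : Type) (f : X -> T * T) (L : seq X) :
  (forall x, fin_supp (f x).1 /\ fin_supp (f x).2) -> F1_valid (map f L).
Proof. by move=> H; elim: L => [|x L IH] //=; split. Qed.

Lemma validP (s : seq (T * T)) a : F1_valid s -> List.In a s -> fin_supp a.1 /\ fin_supp a.2.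
Proof. by elim: s => [|b s IH] //= [Hb Hs] [<-|Ha] //; apply: IH. Qed.

Definition Pa (A : {fset I}) (x : T) := forall i, i \notin A -> x i = 0.

Lemma ip0E (A : {fset I}) x y : Pa A y ->
  ip0 sigma x y = \sum_(i <- A) (d i)%:R * \tr ((y i)^t* *m x i *m sigma i).
Proof.
move=> Hy; rewrite /ip0 /omega /trM /mulM /adjM.
apply: fsbigTE => i /Hy ->.
by rewrite trmx0 map_mx0 !mul0mx mxtrace0 mulr0.
Qed.

Lemma ip0_SOS (A : {fset I}) : delta_form sigma -> SOS (Pa A) (ip0 sigma).
Proof.
move=> df.
pose Q i := (spectralmx (sigma i))^t*.
pose D i := spectral_diag (sigma i).
apply: (@SOS_ext _ _ _ _ (fun u v => \sum_(i <- A) \sum_(p < d i) \sum_(r < d i)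
   ((d i)%:R * D i 0 r) * ((((v i) *m Q i) p r)^* * ((u i) *m Q i) p r))).
  move=> u v Pu Pv; rewrite (ip0E _ _ _ Pv); apply: eq_bigr => i _.
  have [ps _ _] := df i.
  have [_ ->] := psd_decomp _ _ ps.
  rewrite big_distrr /=; apply: eq_bigr => p _.
  rewrite big_distrr /=; apply: eq_bigr => r _.
  by rewrite mulrA.
apply: SOS_sum => i; apply: SOS_sum => p; apply: SOS_sum => r.
apply: SOS_1; apply: mulr_ge0; first exact: ler0n.
have [ps _ _] := df i.
by have [-> _] := psd_decomp _ _ ps.
Qed.

Definition blk (i : I) (F : forall j, 'M[C]_(d j)) : T :=
  fun j => if j == i then F j else 0.

Definition Emx n (k l : nat) : 'M[C]_n :=
  \matrix_(p, q) ((p == k :> nat) && (q == l :> nat))%:R.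

Lemma Emx_ord n (k l : 'I_n) : Emx n k l = delta_mx k l.
Proof. by apply/matrixP => p q; rewrite !mxE. Qed.

Lemma sum_iota n (F : nat -> C) : \sum_(k <- iota 0 n) F k = \sum_(k < n) F k.
Proof. by rewrite -(big_mkord xpredT) /index_iota subn0. Qed.

Lemma sum_iota_mx m (F : nat -> 'M[C]_m) n :
  \sum_(k <- iota 0 n) F k = \sum_(k < n) F k.
Proof. by rewrite -(big_mkord xpredT) /index_iota subn0. Qed.

Lemma blk_fin i F : fin_supp (blk i F).
Proof.
apply: (sub_finite_set (B := [set i])); last exact: finite_set1.
by move=> j /=; rewrite /blk; case: (j =P i) => // _; rewrite eqxx.
Qed.

Lemma ip0_blk x i F :
  ip0 sigma x (blk i F) = (d i)%:R * \tr ((F i)^t* *m x i *m sigma i).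
Proof.
rewrite (ip0E [fset i]%fset); last first.
  by move=> j; rewrite inE /blk => /negbTE ->.
by rewrite big_seq_fset1 /blk eqxx.
Qed.

Definition b1 (eta : T) i (k l : nat) := blk i (fun j =>
  (d j)%:R^-1 *: (eta j *m sigma j *m Emx (d j) l k *m invmx (sigma j))).
Definition b2 i (k l : nat) := blk i (fun j => Emx (d j) k l *m invmx (sigma j)).

Definition idxs (eta : T) : seq (I * (nat * nat)) :=
  flatten [seq [seq (i, (k, l)) | k <- iota 0 (d i), l <- iota 0 (d i)]
          | i <- suppf eta].

Definition mstar (eta : T) : seq (T * T) :=
  [seq (b1 eta x.1 x.2.1 x.2.2, b2 x.1 x.2.1 x.2.2) | x <- idxs eta].

Lemma mstar_valid eta : F1_valid (mstar eta).
Proof. by apply: valid_map => x; split; apply: blk_fin. Qed.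

Lemma sum_mstar (V : nmodType) eta (G : T * T -> V) :
  \sum_(b <- mstar eta) G b = \sum_(i <- suppf eta)
     \sum_(k <- iota 0 (d i)) \sum_(l <- iota 0 (d i)) G (b1 eta i k l, b2 i k l).
Proof.
rewrite big_map big_flatten big_map /=; apply: eq_bigr => i _.
by rewrite big_allpairs_dep.
Qed.

Lemma adjoint eta s : delta_form sigma -> fin_supp eta -> F1_valid s ->
  ip0 sigma (multM s) eta = ip1 sigma s (mstar eta).
Proof.
move=> df fe vs.
have Pe : Pa (suppf eta) eta by move=> i; apply: suppfP.
rewrite (ip0E _ _ _ Pe) /ip1 /multM.
have -> : \sum_(i <- suppf eta) (d i)%:R *
    \tr ((eta i)^t* *m (\sum_(a <- s) a.1 i *m a.2 i) *m sigma i) =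
  \sum_(a <- s) \sum_(i <- suppf eta) (d i)%:R *
    \tr ((eta i)^t* *m (a.1 i *m a.2 i) *m sigma i).
  rewrite exchange_big /=; apply: eq_bigr => i _.
  by rewrite mulmx_sumr mulmx_suml raddf_sum big_distrr.
apply: eq_bigr => a _; rewrite sum_mstar; apply: eq_bigr => i _.
rewrite sum_iota; under eq_bigr => k _ do rewrite sum_iota.
under eq_bigr => k _ do under eq_bigr => l _ do rewrite !ip0_blk /= !Emx_ord.
have [ps su _] := df i; have [hs _] := ps.
by rewrite block_adj.
Qed.

Lemma mult_mstar eta : delta_form sigma -> fin_supp eta ->
  forall j, multM (mstar eta) j = eta j.
Proof.
move=> df fe j; rewrite /multM sum_mstar.
have -> : \sum_(i <- suppf eta) \sum_(k <- iota 0 (d i)) \sum_(l <- iota 0 (d i))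
    ((b1 eta i k l, b2 i k l).1 j *m (b1 eta i k l, b2 i k l).2 j) =
  \sum_(i <- suppf eta) (if j == i then
    \sum_(k <- iota 0 (d j)) \sum_(l <- iota 0 (d j))
     (((d j)%:R^-1 *: (eta j *m sigma j *m Emx (d j) l k *m invmx (sigma j))) *m
      (Emx (d j) k l *m invmx (sigma j))) else 0).
  apply: eq_bigr => i _; rewrite /b1 /b2 /blk /=.
  case: (j =P i) => [<-|_] //.
  by rewrite big1 // => k _; rewrite big1 // => l _; rewrite mul0mx.
have [jS|jS] := boolP (j \in suppf eta); last first.
  rewrite big1_seq; first by rewrite suppfP.
  by move=> i /andP[_ iS]; case: (j =P i) => // ji; rewrite ji iS in jS.
rewrite -big_mkcond /=.
under eq_bigl do rewrite eq_sym.
rewrite (@fbig_pred1_inj _ _ _ _ _ (fun i => \sum_(k <- iota 0 (d j)) \sum_(l <- iota 0 (d j))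
     (((d j)%:R^-1 *: (eta j *m sigma j *m Emx (d j) l k *m invmx (sigma j))) *m
      (Emx (d j) k l *m invmx (sigma j)))) id _ j jS) //.
rewrite sum_iota_mx; under eq_bigr => k _ do rewrite sum_iota_mx.
under eq_bigr => k _ do under eq_bigr => l _ do rewrite !Emx_ord.
have [_ su tr] := df j.
by rewrite block_mult.
Qed.

End Main.

Local Open Scope complex_scope.

Theorem proposition2p4 (I : choiceType) (R : realType) (d : I -> nat)
  (sigma : Mfam R d) :
  delta_form sigma ->
  (* mult : F_1 -> F_0 is bounded *)
  (exists K : R[i], 0 <= K /\
     forall s : seq (Mfam R d * Mfam R d), F1_valid s ->
       ip0 sigma (multM s) (multM s) <= K ^+ 2 * ip1 sigma s s)
  /\
  (* its adjoint mult^* : F_0 -> F_1 exists and mult mult^* = 1 *)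
  (exists mstar : Mfam R d -> seq (Mfam R d * Mfam R d),
     forall eta : Mfam R d, fin_supp eta ->
       [/\ F1_valid (mstar eta),
           (forall s : seq (Mfam R d * Mfam R d), F1_valid s ->
              ip0 sigma (multM s) eta = ip1 sigma s (mstar eta))
         & (forall i, multM (mstar eta) i = eta i)]).
Proof.
move=> df; split; last first.
  exists (mstar sigma) => eta fe; split.
  - exact: mstar_valid.
  - by move=> s vs; apply: adjoint.
  - exact: mult_mstar.
exists 1; split; first exact: ler01.
move=> s vs.
set ms := multM s.
have fms : fin_supp ms.
  apply: (sub_finite_set (B := [set` suppL s])); last exact: finite_fset.
  move=> i /=; apply: contraNT => Hn; apply/eqP.
  rewrite /ms /multM (big_In (G := fun=> 0)) ?big1 // => a Ha.
  by have [-> _] := suppLP _ _ _ vs Ha Hn; rewrite mul0mx.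
set u := mstar sigma ms.
have vu : F1_valid u := mstar_valid sigma ms.
have vsu := valid_cat _ _ vs vu.
set A := suppL (s ++ u).
have HP : forall a, List.In a (s ++ u) -> Pa A a.1 /\ Pa A a.2.
  by move=> a Ha; split => i Hi; have [h1 h2] := suppLP _ _ _ vsu Ha Hi.
have Hs : forall a, List.In a s -> Pa A a.1 /\ Pa A a.2.
  by move=> a Ha; apply: HP; apply: List.in_or_app; left.
have Hu : forall a, List.In a u -> Pa A a.1 /\ Pa A a.2.
  by move=> a Ha; apply: HP; apply: List.in_or_app; right.
have [X [HX HXe]] := ip0_SOS sigma A df.
have B_ : forall s1 s2, (forall a, List.In a s1 -> Pa A a.1 /\ Pa A a.2) ->
    (forall a, List.In a s2 -> Pa A a.1 /\ Pa A a.2) ->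
    ip1 sigma s1 s2 = Bf X X s1 s2.
  by move=> s1 s2 h1 h2; exact: (SOS_prod _ _ _ _ _ _ _ HXe HXe h1 h2).
have e1 : ip0 sigma ms ms = ip1 sigma s u := adjoint sigma _ _ df fms vs.
have e2 : ip1 sigma u u = ip0 sigma ms ms.
  rewrite -adjoint //; congr (ip0 sigma _ ms).
  by apply: functional_extensionality_dep => j; exact: mult_mstar.
have Bsu : Bf X X s u = ip0 sigma ms ms by rewrite -B_ // e1.
have Buu : Bf X X u u = ip0 sigma ms ms by rewrite -B_.
have Bus : Bf X X u s = ip0 sigma ms ms.
  by rewrite Bf_conj // Bsu conj_Creal // ger0_real // -Buu Bf_ge0.
have := Bf_comb _ _ s u HX HX; rewrite Bsu Bus Buu subrK -B_ // subr_ge0 => H.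
by rewrite expr1n mul1r.
Qed.
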